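(* Let $\phi(z)\in\mathbb{R}[z]$ be a cubic polynomial with negative lead coefficient. If $\mathfrak{K}_\infty\cap\mathbb{R}$ consists of more than one point, then $\phi$ has at least two distinct real periodic points of period two. Moreover, if $\alpha\in\mathbb{R}$ is the smallest such periodic point, then $\phi(\alpha)$ is the largest, and $\mathfrak{K}_\infty\cap\mathbb{R}\subseteq[\alpha,\phi(\alpha)]$.
   Context: The (archimedean) filled Julia set of $\phi$ is $\mathfrak{K}_\infty=\{x\in\mathbb{C}:\{|\phi^n(x)|:n\ge0\}\text{ is bounded}\}$, where $\phi^n$ is the $n$-th iterate of $\phi$. A point $x$ is periodic of period $n$ if $n$ is the least positive integer with $\phi^n(x)=x$. *)

(* Defs.v *)
From mathcomp Require Import all_boot all_order all_algebra.
From mathcomp Require Import complex.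
From mathcomp Require Import reals.
Set Implicit Arguments. Unset Strict Implicit. Unset Printing Implicit Defensive.
Import Order.TTheory GRing.Theory Num.Theory.
Local Open Scope ring_scope.
Local Open Scope complex_scope.

Definition polyC_of (R : realType) (phi : {poly R}) : {poly R[i]} :=
  map_poly (fun x : R => x%:C) phi.

(* archimedean filled Julia set: z whose forward orbit under phi is bounded *)
Definition filled_julia (R : realType) (phi : {poly R}) (z : R[i]) : Prop :=
  exists M : R, forall n : nat,
    `| iter n (fun w => (polyC_of phi).[w]) z | <= M%:C.

Definition period_two (R : realType) (phi : {poly R}) (x : R) : Prop :=
  phi.[phi.[x]] = x /\ phi.[x] != x.

(* Main.v *)
Require Import Defs.
From mathcomp Require Import all_boot all_order all_algebra.
From mathcomp Require Import complex.
From mathcomp Require Import reals.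
From mathcomp Require Import classical_sets.
From mathcomp Require Import polyrcf.
From mathcomp Require Import lra.
Set Implicit Arguments. Unset Strict Implicit. Unset Printing Implicit Defensive.
Import Order.TTheory GRing.Theory Num.Theory Num.Def.
Local Open Scope ring_scope.
Local Open Scope complex_scope.

Lemma lead_compNX (R : realType) (p : {poly R}) :
  lead_coef (p \Po -'X) = lead_coef p * (-1) ^+ (size p).-1.
Proof. by rewrite lead_coef_comp ?size_polyN ?size_polyX // lead_coefN lead_coefX. Qed.

Lemma seq_max (R : realType) (s : seq R) : s != [::] ->
  exists2 m, m \in s & forall y, y \in s -> y <= m.
Proof.
elim: s => // x [|x' s] IH _.
  by exists x; rewrite ?mem_seq1 // => y; rewrite mem_seq1 => /eqP ->.
have [m ms Hm] := IH isT.
exists (maxr x m); first by rewrite /maxr; case: ifP => _; rewrite inE ?eqxx ?ms ?orbT.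
by move=> y; rewrite inE => /orP [/eqP ->|/Hm]; rewrite le_max ?lexx // => ->; rewrite orbT.
Qed.

Lemma seq_min (R : realType) (s : seq R) : s != [::] ->
  exists2 m, m \in s & forall y, y \in s -> m <= y.
Proof.
elim: s => // x [|x' s] IH _.
  by exists x; rewrite ?mem_seq1 // => y; rewrite mem_seq1 => /eqP ->.
have [m ms Hm] := IH isT.
exists (minr x m); first by rewrite /minr; case: ifP => _; rewrite inE ?eqxx ?ms ?orbT.
by move=> y; rewrite inE => /orP [/eqP ->|/Hm]; rewrite ge_min ?lexx // => ->; rewrite orbT.
Qed.

Lemma c4 (R : realType) (c : R) : c < 0 -> 0 < c * c ^+ 3.
Proof. by move=> hc; rewrite -exprS exprn_even_gt0 //= lt_eqF. Qed.
Definition Kr (R : realType) (p : {poly R}) (x : R) :=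
  exists M : R, forall n, `|iter n (horner p) x| <= M.

Lemma iterC (R : realType) (p : {poly R}) x n :
  iter n (fun w => (polyC_of p).[w]) x%:C = (iter n (horner p) x)%:C.
Proof. elim: n => //= n ->; rewrite /polyC_of; exact: horner_map. Qed.

Lemma julia_Kr (R : realType) (p : {poly R}) x : filled_julia p x%:C -> Kr p x.
Proof.
case=> M HM; exists M => n; have := HM n; rewrite iterC normc_def /=.
by rewrite expr0n /= addr0 sqrtr_sqr lecR.
Qed.

Lemma Kr_back (R : realType) (p : {poly R}) x : Kr p p.[x] -> Kr p x.
Proof.
case=> M HM; exists (maxr M `|x|) => -[|n]; first by rewrite /= le_max lexx orbT.
by rewrite iterSr le_max HM.
Qed.

Lemma Kr_per2 (R : realType) (p : {poly R}) a : p.[p.[a]] = a -> Kr p a.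
Proof.
move=> Ha; exists (`|a| + `|p.[a]|) => n.
have : iter n (horner p) a = a \/ iter n (horner p) a = p.[a].
  elim: n => [|n [] IH] /=; [by left| by right; rewrite IH | by left; rewrite IH].
case=> ->; [rewrite lerDl | rewrite lerDr]; exact: normr_ge0.
Qed.
Lemma escape (R : realType) (g : {poly R}) (b x M : R) :
  (forall t, b < t -> 0 < g.[t]) -> b < x ->
  (forall n, iter n (fun t => t + g.[t]) x <= M) -> False.
Proof.
move=> gpos bx HM.
set F := fun t => t + g.[t].
have Hb : forall n, b < iter n F x.
  elim=> [//|n IH /=]; rewrite /F; apply: (lt_le_trans IH).
  by rewrite lerDl ltW // gpos.
pose E := fun y => exists n, y = iter n F x.
have hs : has_sup E.
  split; first by exists x; exists 0%N.
  by exists M => y [n ->].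
set s := sup E.
have xs : x <= s by apply: (sup_upper_bound hs); exists 0%N.
have gs : 0 < g.[s] by apply: gpos; exact: lt_le_trans xs.
have h2 : 0 < g.[s] / 2%:R by rewrite divr_gt0 // ltr0n.
have [d d0 Hd] := poly_cont s g h2.
have e0 : 0 < minr d (g.[s] / 2%:R) by rewrite lt_min d0 h2.
have [y [n ->] Hy] := sup_adherent e0 hs.
have Hn1 : iter n.+1 F x <= s by apply: (sup_upper_bound hs); exists n.+1.
have Hn : iter n F x <= s by apply: (sup_upper_bound hs); exists n.
move: Hy Hn1 Hn; rewrite /= /F; set z := iter n F x => Hy Hn1 Hn.
have Hd1 : s - d < z by apply: le_lt_trans Hy; rewrite lerD2l lerN2 ge_min lexx.
have Hd2 : s - g.[s] / 2%:R < z by apply: le_lt_trans Hy; rewrite lerD2l lerN2 ge_min lexx orbT.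
have : `|g.[z] - g.[s]| < g.[s] / 2%:R.
  apply: Hd; rewrite ler0_norm ?subr_le0 // opprB ltrBlDr -ltrBlDl //.
rewrite ltr_norml => /andP [H1 _].
have : s < z + g.[z] by lra.
by rewrite ltNge Hn1.
Qed.
Section Main.
Variable R : realType.
Variable phi : {poly R}.
Hypothesis Hs : size phi = 4%N.
Hypothesis Hc : lead_coef phi < 0.

Let g := (phi \Po phi) - 'X.
Let hg x : g.[x] = phi.[phi.[x]] - x.
Proof. by rewrite /g hornerD hornerN horner_comp hornerX. Qed.

Let sizepp : size (phi \Po phi) = 10%N.
Proof.
have := size_comp_poly phi phi; rewrite Hs /=.
by case: (size (phi \Po phi)) => [|k] //= ->.
Qed.

Let sizeg : size g = 10%N.
Proof. by rewrite /g size_polyDl ?sizepp // size_polyN size_polyX. Qed.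

Let leadg : lead_coef g = lead_coef phi * lead_coef phi ^+ 3.
Proof. by rewrite /g lead_coefDl ?sizepp ?size_polyN ?size_polyX // lead_coef_comp ?Hs. Qed.

Let gn0 : g != 0.
Proof. by rewrite -size_poly_eq0 sizeg. Qed.

Let rootsg y : root g y = (y \in rootsR g).
Proof. by rewrite -(roots_on_rootsR gn0) in_itv. Qed.

Let rne : rootsR g != [::].
Proof.
have [r hr] : {x | root g x} by apply: odd_poly_root; rewrite sizeg.
by move: hr; rewrite rootsg; case: (rootsR g).
Qed.

Let rootE' y : root g y = (phi.[phi.[y]] == y).
Proof. by rewrite rootE hg subr_eq0. Qed.

Lemma main_facts : exists a b : R,
  [/\ phi.[phi.[a]] = a, phi.[phi.[b]] = b,
      (forall y, phi.[phi.[y]] = y -> a <= y <= b),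
      (forall t, b < t -> 0 < g.[t]) & (forall t, t < a -> g.[t] < 0)].
Proof.
have [b bs Hb] := seq_max rne.
have [a as_ Ha] := seq_min rne.
have Hr y : phi.[phi.[y]] = y -> a <= y <= b.
  by move=> /eqP; rewrite -rootE' rootsg => hy; rewrite Ha ?Hb.
have lg : 0 < lead_coef g by rewrite leadg; exact: c4.
exists a, b; split.
- by apply/eqP; rewrite -rootE' rootsg.
- by apply/eqP; rewrite -rootE' rootsg.
- exact: Hr.
- have [n0 Hn0] := poly_pinfty_gt_lc lg.
  move=> t bt; rewrite ltNge; apply/negP => gt.
  have hT : t <= maxr t n0 by rewrite le_max lexx.
  have gT : 0 < g.[maxr t n0].
    by apply: lt_le_trans lg (Hn0 _ _); rewrite le_max lexx orbT.
  have [x] := polyrcf.poly_ivt hT (mulr_le0_ge0 gt (ltW gT)).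
  rewrite in_itv /= => /andP [xt _] /rootP.
  rewrite hg => /eqP; rewrite subr_eq0 => /eqP /Hr /andP [_ xb].
  lra.
- pose h := - (g \Po -'X).
  have hh t : h.[t] = - g.[-t] by rewrite /h hornerN horner_comp hornerN hornerX.
  have lh : lead_coef h = lead_coef g.
    by rewrite /h lead_coefN lead_compNX sizeg -signr_odd /= expr1 mulrN1 opprK.
  rewrite -lh in lg.
  have [n1 Hn1] := poly_pinfty_gt_lc lg.
  move=> t ta; rewrite ltNge; apply/negP => gt.
  have hT : minr t (- n1) <= t by rewrite ge_min lexx.
  have gT : g.[minr t (- n1)] < 0.
    have H : n1 <= - minr t (- n1) by rewrite lerNr ge_min lexx orbT.
    have := Hn1 _ H; rewrite hh opprK => H2; lra.
  have [x] := polyrcf.poly_ivt hT (mulr_le0_ge0 (ltW gT) gt).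
  rewrite in_itv /= => /andP [_ xt] /rootP.
  rewrite hg => /eqP; rewrite subr_eq0 => /eqP /Hr /andP [ax _].
  lra.
Qed.

Lemma final : (exists x y : R, x != y /\ Kr phi x /\ Kr phi y) ->
  exists a b : R, [/\ a < b, phi.[a] = b, phi.[b] = a,
    (forall y, phi.[phi.[y]] = y -> a <= y <= b) &
    (forall x, Kr phi x -> a <= x <= b)].
Proof.
move=> [x0 [y0 [xy [Kx Ky]]]].
have [a [b [ra rb rab pos neg]]] := main_facts.
have escp x : b < x -> Kr phi x -> False.
  move=> bx [M HM]; apply: (escape pos bx (M:=M)) => n.
  have -> : iter n (fun t => t + g.[t]) x = iter n.*2 (horner phi) x.
    elim: n => //= n IH; rewrite IH hg.
    by rewrite addrC subrK.
  exact: le_trans (ler_norm _) (HM _).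
have escm x : x < a -> Kr phi x -> False.
  move=> xa [M HM].
  pose g' := - (g \Po -'X).
  have hg' t : g'.[t] = - g.[-t] by rewrite /g' hornerN horner_comp hornerN hornerX.
  have pos' t : - a < t -> 0 < g'.[t].
    by move=> at_; rewrite hg' oppr_gt0 neg // ltrNl.
  have ax : - a < - x by rewrite ltrN2.
  apply: (escape pos' ax (M:=M)) => n.
  have -> : iter n (fun t => t + g'.[t]) (- x) = - iter n.*2 (horner phi) x.
    elim: n => //= n IH; rewrite IH hg' opprK hg.
    lra.
  apply: le_trans (HM n.*2); rewrite -normrN; exact: ler_norm.
have lowK y : Kr phi y -> phi.[b] <= y.
  move=> Ky'; rewrite leNgt; apply/negP => yb.
  pose q := phi - y%:P.
  have hq t : q.[t] = phi.[t] - y by rewrite /q hornerD hornerN hornerC.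
  have lq : 0 < lead_coef (- q).
    rewrite lead_coefN /q lead_coefDl ?oppr_gt0 // size_polyN Hs.
    by apply: leq_ltn_trans (size_polyC_leq1 _) _.
  have [n Hn] := poly_pinfty_gt_lc lq.
  have hT : b <= maxr b n by rewrite le_max lexx.
  have qT : q.[maxr b n] < 0.
    have := Hn (maxr b n); rewrite le_max lexx orbT hornerN => /(_ isT) H; lra.
  have qb : 0 < q.[b] by rewrite hq subr_gt0.
  have [x] := polyrcf.poly_ivt hT (mulr_ge0_le0 (ltW qb) (ltW qT)).
  rewrite in_itv /= => /andP [bx _] /rootP; rewrite hq => /eqP; rewrite subr_eq0 => /eqP px.
  have bx' : b < x.
    rewrite lt_neqAle bx andbT; apply/negP => /eqP ebx.
    by move: yb; rewrite ebx px ltxx.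
  by apply: (escp x bx'); apply: Kr_back; rewrite px.
have upK y : Kr phi y -> y <= phi.[a].
  move=> Ky'; rewrite leNgt; apply/negP => ya.
  pose q := phi - y%:P.
  have hq t : q.[t] = phi.[t] - y by rewrite /q hornerD hornerN hornerC.
  have sq : size q = 4%N.
    rewrite /q size_polyDl // size_polyN Hs.
    by apply: leq_ltn_trans (size_polyC_leq1 _) _.
  have lq : 0 < lead_coef (q \Po -'X).
    rewrite lead_compNX sq /q lead_coefDl; last first.
      by rewrite size_polyN Hs; apply: leq_ltn_trans (size_polyC_leq1 _) _.
    by rewrite /= !exprS expr0 mulr1 !mulN1r opprK mulrN1 oppr_gt0.
  have [n Hn] := poly_pinfty_gt_lc lq.
  have hT : minr a (- n) <= a by rewrite ge_min lexx.
  have qT : 0 < q.[minr a (- n)].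
    have H : n <= - minr a (- n) by rewrite lerNr ge_min lexx orbT.
    have := Hn _ H; rewrite horner_comp hornerN hornerX opprK => H2; lra.
  have qa : q.[a] < 0 by rewrite hq subr_lt0.
  have [x] := polyrcf.poly_ivt hT (mulr_ge0_le0 (ltW qT) (ltW qa)).
  rewrite in_itv /= => /andP [_ xa] /rootP; rewrite hq => /eqP; rewrite subr_eq0 => /eqP px.
  have xa' : x < a.
    rewrite lt_neqAle xa andbT; apply/negP => /eqP exa.
    by move: ya; rewrite -exa px ltxx.
  by apply: (escm x xa'); apply: Kr_back; rewrite px.
have Ka := Kr_per2 ra.
have Kb := Kr_per2 rb.
have /andP [a1 a2] : a <= phi.[a] <= b by apply: rab; rewrite ra.
have /andP [b1 b2] : a <= phi.[b] <= b by apply: rab; rewrite rb.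
have l1 := lowK _ Ka.
have u1 := upK _ Kb.
have pa : phi.[a] = b by lra.
have pb : phi.[b] = a by lra.
have Kab x : Kr phi x -> a <= x <= b.
  by move=> Kx'; apply/andP; split; [rewrite -pb; exact: lowK | rewrite -pa; exact: upK].
exists a, b; split => //.
have /andP [x1 x2] := Kab _ Kx.
have /andP [y1 y2] := Kab _ Ky.
rewrite ltNge; apply/negP => ba.
have e : x0 = y0 by lra.
by move: xy; rewrite e eqxx.
Qed.
End Main.

Theorem lemma4p11 (R : realType) (phi : {poly R}) :
  size phi = 4%N -> lead_coef phi < 0 ->
  (exists x y : R, x != y /\ filled_julia phi x%:C /\ filled_julia phi y%:C) ->
  (exists a b : R, a != b /\ period_two phi a /\ period_two phi b) /\
  (forall alpha : R, period_two phi alpha ->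
     (forall y : R, period_two phi y -> alpha <= y) ->
     (forall y : R, period_two phi y -> y <= phi.[alpha]) /\
     (forall x : R, filled_julia phi x%:C -> alpha <= x <= phi.[alpha])).
Proof.
move=> Hs Hc [x [y [xy [Jx Jy]]]].
have [a [b [ab pa pb rab Kab]]] :
    exists a b : R, [/\ a < b, phi.[a] = b, phi.[b] = a,
    (forall y, phi.[phi.[y]] = y -> a <= y <= b) &
    (forall x, Kr phi x -> a <= x <= b)].
  by apply: final => //; exists x, y; split => //; split; apply: julia_Kr.
have Pa : period_two phi a by split; rewrite ?pa ?pb // eq_sym lt_eqF.
have Pb : period_two phi b by split; rewrite ?pa ?pb // lt_eqF.
split; first by exists a, b; split => //; rewrite lt_eqF.
move=> al [ral _] almin.
have /andP [h1 _] := rab _ ral.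
have h2 := almin _ Pa.
have -> : al = a by apply/eqP; rewrite eq_le h1 h2.
rewrite pa; split.
  by move=> z [rz _]; have /andP [_ ->] := rab _ rz.
by move=> z Jz; apply: Kab; apply: julia_Kr.
Qed.
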